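(* There is $C_{\boldsymbol\tau,\boldsymbol\eta}>0$ such that for any $\phi\in W^\infty(\mathbb T^{2n})$ and any nonconstant zero-average $f,g\in W_0^\infty(\mathbb T^{2n})$ with $L_{\boldsymbol\eta}f-L_{\boldsymbol\tau}g=\phi$, there is a nonconstant $P\in W^\infty(\mathbb T^{2n})$ such that for all $s\ge0$: $\|g-L_{\boldsymbol\eta}P\|_s\le C_{\boldsymbol\tau,\boldsymbol\eta}\|\phi\|_{s+2\gamma}$, $\|f-L_{\boldsymbol\tau}P\|_s\le C_{\boldsymbol\tau,\boldsymbol\eta}\|\phi\|_{s+2\gamma}$, $\|P\|_s\le C_{\boldsymbol\tau,\boldsymbol\eta}(\|f\|_{s+2\gamma}+\|g\|_{s+2\gamma})$.
   Context: $\boldsymbol\tau=(\tau_1,\dots,\tau_n,0,\dots,0)$, $\boldsymbol\eta=(0,\dots,0,\eta_1,\dots,\eta_n)\in\mathbb R^{2n}$, $n\ge2$, with $\sum\tau_j\eta_j=0$, Diophantine: there are $c,\gamma>0$ with $|\boldsymbol\tau\cdot\mathbf m-p|>c|\mathbf m_1\cdot\mathbf m_1|^{-\gamma}$ if $\mathbf m_1\ne0$ and $|\boldsymbol\eta\cdot\mathbf m-p|>c|\mathbf m_2\cdot\mathbf m_2|^{-\gamma}$ if $\mathbf m_2\ne0$, for $\mathbf m=(\mathbf m_1,\mathbf m_2)\in\mathbb Z^n\times\mathbb Z^n$, $p\in\mathbb Z$. On $L^2(\mathbb T^{2n})$ write $f=\sum_{\mathbf m}f_{\mathbf m}e^{2\pi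 i\mathbf m\cdot(\mathbf x,\boldsymbol\xi)}$, $\|f\|_s^2=\sum_{\mathbf m}(1+4\pi^2\mathbf m\cdot\mathbf m)^s|f_{\mathbf m}|^2$, $W^\infty(\mathbb T^{2n})=\bigcap_sW^s$, $W^\infty_0$ its zero-average subspace. For $\boldsymbol\kappa\in\{\boldsymbol\tau,\boldsymbol\eta\}$, $L_{\boldsymbol\kappa}h(\mathbf x,\boldsymbol\xi)=h((\mathbf x,\boldsymbol\xi)+\boldsymbol\kappa)-h(\mathbf x,\boldsymbol\xi)$. *)

(* Defs.v *)
(* classical reals. Functions in L^2(T^{2n}) are modelled by
   their Fourier coefficients, indexed by m = (m1, m2) in Z^n x Z^n. *)
From Stdlib Require Import Reals Lra List ZArith ClassicalEpsilon.
Open Scope R_scope.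

Definition Cx : Type := (R * R)%type.
Definition cnorm2 (z : Cx) : R := fst z * fst z + snd z * snd z.
Definition cmul (z w : Cx) : Cx :=
  (fst z * fst w - snd z * snd w, fst z * snd w + snd z * fst w).
Definition csub (z w : Cx) : Cx := (fst z - fst w, snd z - snd w).
Definition c0 : Cx := (0, 0).
Definition c1 : Cx := (1, 0).
Definition expi (theta : R) : Cx := (cos (2 * PI * theta), sin (2 * PI * theta)).

Definition Idx : Type := (list Z * list Z)%type.
Definition valid (n : nat) (m : Idx) : Prop :=
  length (fst m) = n /\ length (snd m) = n.
Definition zeroZ (n : nat) : list Z := repeat 0%Z n.
Definition zeroIdx (n : nat) : Idx := (zeroZ n, zeroZ n).

Definition dotRZ (t : list R) (m : list Z) : R :=
  fold_right Rplus 0 (map (fun p => fst p * IZR (snd p)) (combine t m)).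
Definition dotRR (t u : list R) : R :=
  fold_right Rplus 0 (map (fun p => fst p * snd p) (combine t u)).
Definition dotZZ (m : list Z) : R :=
  fold_right Rplus 0 (map (fun z => IZR z * IZR z) m).
Definition dotK (k : list R * list R) (m : Idx) : R :=
  dotRZ (fst k) (fst m) + dotRZ (snd k) (snd m).
Definition mdot (m : Idx) : R := dotZZ (fst m) + dotZZ (snd m).

Definition tauvec (n : nat) (tau : list R) : list R * list R := (tau, repeat 0 n).
Definition etavec (n : nat) (eta : list R) : list R * list R := (repeat 0 n, eta).

(* Fourier coefficients of h(. + kappa) - h *)
Definition Lop (k : list R * list R) (h : Idx -> Cx) : Idx -> Cx :=
  fun m => cmul (csub (expi (dotK k m)) c1) (h m).

Definition weight (s : R) (m : Idx) : R := Rpower (1 + 4 * PI ^ 2 * mdot m) s.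
Definition partial (s : R) (a : Idx -> Cx) (F : list Idx) : R :=
  fold_right Rplus 0 (map (fun m => weight s m * cnorm2 (a m)) F).
Definition ValidSet (n : nat) (F : list Idx) : Prop :=
  NoDup F /\ Forall (valid n) F.

Definition InW (n : nat) (s : R) (a : Idx -> Cx) : Prop :=
  exists B, forall F, ValidSet n F -> partial s a F <= B.
Definition InWinf (n : nat) (a : Idx -> Cx) : Prop := forall s, InW n s a.
Definition zero_avg (n : nat) (a : Idx -> Cx) : Prop := a (zeroIdx n) = c0.
Definition nonconstant (n : nat) (a : Idx -> Cx) : Prop :=
  exists m, valid n m /\ m <> zeroIdx n /\ a m <> c0.

Definition Rsup (E : R -> Prop) : R :=
  match excluded_middle_informative (bound E) with
  | left hb =>
      match excluded_middle_informative (exists x, E x) with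
      | left he => proj1_sig (completeness E hb he)
      | right _ => 0
      end
  | right _ => 0
  end.

Definition snorm (n : nat) (s : R) (a : Idx -> Cx) : R :=
  sqrt (Rsup (fun r => exists F, ValidSet n F /\ r = partial s a F)).

Definition diophantine (n : nat) (tau eta : list R) (c gamma : R) : Prop :=
  (forall m : Idx, forall p : Z, valid n m -> fst m <> zeroZ n ->
     Rabs (dotK (tauvec n tau) m - IZR p) > c * Rpower (dotZZ (fst m)) (- gamma)) /\
  (forall m : Idx, forall p : Z, valid n m -> snd m <> zeroZ n ->
     Rabs (dotK (etavec n eta) m - IZR p) > c * Rpower (dotZZ (snd m)) (- gamma)).

(* Main.v *)
Require Import Defs.
From Stdlib Require Import Reals List ZArith.
Open Scope R_scope.
From Stdlib Require Import Reals Lra Lia Psatz ZArith List ClassicalEpsilon.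
Open Scope R_scope.
Import Defs.
Lemma sin_lin (y : R) : 0 <= y -> y <= 2 -> y <= PI -> y / 3 <= sin y.
Proof.
  intros H0 H2 Hp. destruct (SIN y H0 Hp) as [H _].
  assert (E : sin_lb y = y - y^3/6 + y^5/120 - y^7/5040).
  { unfold sin_lb, sin_approx, sin_term. simpl. field. }
  rewrite E in H. clear E.
  assert (y*y <= 4) by nra.
  assert (0 <= y^5/120 - y^7/5040).
  { replace (y^5/120 - y^7/5040) with (y^5 * (42 - y*y)/5040) by field.
    apply Rmult_le_pos; [|lra]. apply Rmult_le_pos; [apply pow_le; lra|lra]. }
  assert (y^3/6 <= 4*y/6). { replace (y^3) with (y*(y*y)) by ring. nra. }
  lra.
Qed.
Lemma cos_Zper (y : R) (p : Z) : cos (y + 2 * IZR p * PI) = cos y.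
Proof.
  destruct p as [|q|q].
  - simpl. f_equal. ring.
  - assert (IZR (Zpos q) = INR (Pos.to_nat q)).
    { rewrite INR_IZR_INZ. f_equal. lia. }
    rewrite H. apply cos_period.
  - assert (IZR (Zneg q) = - INR (Pos.to_nat q)).
    { rewrite INR_IZR_INZ. rewrite <- opp_IZR. f_equal. lia. }
    rewrite H. rewrite <- (cos_period (y + 2 * - INR (Pos.to_nat q) * PI) (Pos.to_nat q)).
    f_equal. ring.
Qed.
Lemma expi_lb x d : 0 < d -> (forall p : Z, Rabs (x - IZR p) > d) ->
  4 * (d * d) <= cnorm2 (csub (expi x) c1).
Proof.
  intros Hd Hp.
  set (p := (up (x + 1/2) - 1)%Z).
  destruct (archimed (x + 1/2)) as [A1 A2].
  assert (Ep : IZR p = IZR (up (x+1/2)) - 1) by (unfold p; rewrite minus_IZR; reflexivity).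
  set (r := x - IZR p).
  assert (Hr1 : -1/2 <= r) by (unfold r; lra).
  assert (Hr2 : r < 1/2) by (unfold r; lra).
  specialize (Hp p). fold r in Hp.
  assert (E : cnorm2 (csub (expi x) c1) = 4 * (sin (PI * r) * sin (PI * r))).
  { unfold cnorm2, csub, expi, c1; simpl.
    replace (2 * PI * x) with (2 * (PI * r) + 2 * IZR p * PI) by (unfold r; ring).
    rewrite cos_Zper.
    assert (S2 : sin (2 * (PI * r) + 2 * IZR p * PI) ^ 2 = 1 - cos (2 * (PI * r)) ^ 2).
    { pose proof (sin2_cos2 (2 * (PI * r) + 2 * IZR p * PI)) as K.
      rewrite cos_Zper in K. unfold Rsqr in K. simpl. lra. }
    rewrite cos_2a_sin. simpl in S2. rewrite cos_2a_sin in S2. nra. }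
  rewrite E.
  assert (Hs : Rabs r <= sin (PI * Rabs r)).
  { pose proof PI2_3_2. pose proof PI_4.
    assert (0 <= Rabs r) by apply Rabs_pos.
    assert (Rabs r <= 1/2) by (apply Rabs_le; lra).
    pose proof (sin_lin (PI * Rabs r)). nra. }
  assert (sin (PI * r) * sin (PI * r) = sin (PI * Rabs r) * sin (PI * Rabs r)).
  { unfold Rabs. destruct (Rcase_abs r).
    - replace (PI * - r) with (- (PI * r)) by ring. rewrite sin_neg. ring.
    - reflexivity. }
  rewrite H. 
  assert (Rabs r > d) by exact Hp.
  nra.
Qed.
Definition cinv (w : Cx) : Cx := (fst w / cnorm2 w, - snd w / cnorm2 w).
Definition cdiv (z w : Cx) : Cx := cmul z (cinv w).
Definition cadd (z w : Cx) : Cx := (fst z + fst w, snd z + snd w).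

Lemma cnorm2_ge0 z : 0 <= cnorm2 z.
Proof. unfold cnorm2. nra. Qed.

Lemma cnorm2_mul z w : cnorm2 (cmul z w) = cnorm2 z * cnorm2 w.
Proof. destruct z, w; unfold cnorm2, cmul; simpl; ring. Qed.

Lemma cmul_div w z : cnorm2 w <> 0 -> cmul w (cdiv z w) = z.
Proof.
  destruct w as [w1 w2], z as [z1 z2]; unfold cdiv, cinv, cmul, cnorm2; simpl; intro H.
  f_equal; field; exact H.
Qed.

Lemma cnorm2_div z w : cnorm2 w <> 0 -> cnorm2 (cdiv z w) = cnorm2 z / cnorm2 w.
Proof.
  intro H. apply (Rmult_eq_reg_l (cnorm2 w)); [|exact H].
  rewrite <- cnorm2_mul, cmul_div by exact H. field. exact H.
Qed.

Lemma cnorm2_add z w : cnorm2 (cadd z w) <= 2 * (cnorm2 z + cnorm2 w).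
Proof. destruct z as [a b], w as [c d]; unfold cnorm2, cadd; simpl.
  pose proof (Rle_0_sqr (a - c)); pose proof (Rle_0_sqr (b - d)); unfold Rsqr in *. nra. Qed.

Lemma cnorm2_c0 : cnorm2 c0 = 0.
Proof. unfold cnorm2, c0; simpl; ring. Qed.

Lemma caseA a b f g : cnorm2 a <> 0 ->
  cnorm2 (csub g (cmul b (cdiv f a))) * cnorm2 a = cnorm2 (csub (cmul b f) (cmul a g)).
Proof.
  intro H.
  assert (E : cmul a (csub g (cmul b (cdiv f a))) =
              (- fst (csub (cmul b f) (cmul a g)), - snd (csub (cmul b f) (cmul a g)))).
  { destruct a as [a1 a2], b as [b1 b2], f as [f1 f2], g as [g1 g2].
    unfold cdiv, cinv, cmul, csub, cnorm2 in *; simpl in *. f_equal; field; exact H. }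
  rewrite Rmult_comm, <- cnorm2_mul, E. unfold cnorm2; simpl; ring.
Qed.

Lemma caseB1 a f : cnorm2 a <> 0 -> csub f (cmul a (cdiv f a)) = (0, 0).
Proof.
  intro H. rewrite cmul_div by exact H. destruct f; unfold csub; simpl; f_equal; ring.
Qed.

Lemma caseA2 b f g (t : bool) : cnorm2 b <> 0 ->
  cnorm2 (csub g (cmul b (cadd (cdiv g b) (if t then f else c0)))) <= cnorm2 (cmul b f).
Proof.
  intro H. destruct t.
  - replace (csub g (cmul b (cadd (cdiv g b) f))) with
      ((- fst (cmul b f), - snd (cmul b f)) : Cx).
    + unfold cnorm2; simpl; lra.
    + destruct b as [b1 b2], f as [f1 f2], g as [g1 g2].
      unfold cdiv, cinv, cmul, csub, cadd, cnorm2 in *; simpl in *. f_equal; field; exact H.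
  - replace (csub g (cmul b (cadd (cdiv g b) c0))) with ((0,0) : Cx).
    + pose proof (cnorm2_ge0 (cmul b f)). unfold cnorm2 at 1; simpl; lra.
    + destruct b as [b1 b2], g as [g1 g2].
      unfold cdiv, cinv, cmul, csub, cadd, cnorm2, c0 in *; simpl in *. f_equal; field; exact H.
Qed.

Lemma dotRZ_zr t k : dotRZ t (repeat 0%Z k) = 0.
Proof.
  revert k; induction t as [|x t IH]; intros [|k]; unfold dotRZ in *; simpl; try ring.
  rewrite IH. ring.
Qed.

Lemma dotRZ_zl t k : dotRZ (repeat 0 k) t = 0.
Proof.
  revert k; induction t as [|x t IH]; intros [|k]; unfold dotRZ in *; simpl; try ring.
  rewrite IH. ring.
Qed.

Lemma dotZZ_ge0 m : 0 <= dotZZ m.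
Proof. induction m; unfold dotZZ in *; simpl; [lra| nra]. Qed.

Lemma dotZZ_ge1 m k : length m = k -> m <> repeat 0%Z k -> 1 <= dotZZ m.
Proof.
  revert k; induction m as [|z m IH]; intros [|k] Hl Hne; simpl in *; try discriminate.
  - contradiction.
  - unfold dotZZ in *; simpl.
    pose proof (dotZZ_ge0 m) as H0; unfold dotZZ in H0.
    destruct (Z.eq_dec z 0) as [->|Hz].
    + assert (m <> repeat 0%Z k) by (intro E; apply Hne; rewrite E; reflexivity).
      specialize (IH k ltac:(lia) H). simpl. lra.
    + assert (1 <= IZR z * IZR z).
      { rewrite <- mult_IZR. apply IZR_le. nia. }
      lra.
Qed.

Lemma expi0 : csub (expi 0) c1 = (0,0).
Proof. unfold expi, csub, c1; simpl. rewrite Rmult_0_r, cos_0, sin_0. f_equal; ring. Qed.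

Lemma cmul00 z : cmul (0,0) z = (0,0).
Proof. unfold cmul; simpl; f_equal; ring. Qed.

Lemma Rpower_1l x : Rpower 1 x = 1.
Proof. unfold Rpower. rewrite ln_1, Rmult_0_r, exp_0. reflexivity. Qed.

Lemma Rpower_pos x y : 0 < Rpower x y.
Proof. unfold Rpower. apply exp_pos. Qed.

Definition Wg (gamma : R) (m : Idx) : R := Rpower (1 + 4 * PI ^ 2 * mdot m) (2 * gamma).

Lemma W_ge1 m : 1 <= 1 + 4 * PI ^ 2 * mdot m.
Proof.
  unfold mdot. pose proof (dotZZ_ge0 (fst m)). pose proof (dotZZ_ge0 (snd m)).
  pose proof PI_RGT_0. assert (0 <= PI^2) by (apply pow_le; lra). nra.
Qed.

Lemma Wg_ge1 gamma m : 0 < gamma -> 1 <= Wg gamma m.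
Proof.
  intro. unfold Wg. apply Rle_trans with (Rpower 1 (2*gamma)).
  { rewrite Rpower_1l; lra. }
  apply Rle_Rpower_l; [lra|]. split; [lra| apply W_ge1].
Qed.

Lemma dio_bound (x D W c gamma : R) : 1 <= D -> D <= W -> 0 < c -> 0 < gamma ->
  (forall p : Z, Rabs (x - IZR p) > c * Rpower D (- gamma)) ->
  0 < cnorm2 (csub (expi x) c1) /\
  / cnorm2 (csub (expi x) c1) <= Rpower W (2 * gamma) / (4 * (c * c)).
Proof.
  intros HD HW Hc Hg Hp.
  pose proof (Rpower_pos D (- gamma)) as Hq.
  assert (Hd : 0 < c * Rpower D (- gamma)) by (apply Rmult_lt_0_compat; lra).
  pose proof (expi_lb _ _ Hd Hp) as L.
  assert (E : Rpower D (- gamma) * Rpower D (- gamma) = / Rpower D (2 * gamma)).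
  { rewrite <- Rpower_plus, <- Rpower_Ropp. f_equal; ring. }
  assert (M : Rpower D (2*gamma) <= Rpower W (2*gamma)) by (apply Rle_Rpower_l; lra).
  pose proof (Rpower_pos D (2*gamma)) as HP.
  set (N := cnorm2 (csub (expi x) c1)) in *.
  assert (HN : 0 < N) by nra.
  split; [exact HN|].
  replace (4 * (c * Rpower D (- gamma) * (c * Rpower D (- gamma)))) with
     (4 * (c*c) / Rpower D (2*gamma)) in L
     by (unfold Rdiv; rewrite <- E; ring).
  apply Rle_trans with (Rpower D (2 * gamma) / (4 * (c * c))).
  - apply (Rmult_le_reg_l N); [lra|]. 
    apply (Rmult_le_reg_l (4 * (c*c) / Rpower D (2*gamma))).
    { apply Rdiv_lt_0_compat; nra. }
    replace (4 * (c * c) / Rpower D (2 * gamma) * (N * / N)) with (4 * (c * c) / Rpower D (2 * gamma)) by (field; lra).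
    replace (4 * (c * c) / Rpower D (2 * gamma) * (N * (Rpower D (2 * gamma) / (4 * (c * c))))) with N by (field; nra).
    exact L.
  - unfold Rdiv. apply Rmult_le_compat_r; [|exact M].
    left; apply Rinv_0_lt_compat; nra.
Qed.
Lemma weight_pos s m : 0 <= weight s m.
Proof. left; apply Rpower_pos. Qed.

Lemma partial_le s s' (x y z : Idx -> Cx) K F : 0 <= K ->
  (forall m, In m F -> weight s m * cnorm2 (x m) <=
      K * (weight s' m * cnorm2 (y m) + weight s' m * cnorm2 (z m))) ->
  partial s x F <= K * (partial s' y F + partial s' z F).
Proof.
  intros HK; induction F as [|a F IH]; intro H; unfold partial in *; simpl.
  - lra.
  - pose proof (H a (or_introl eq_refl)).
    assert (fold_right Rplus 0 (map (fun m => weight s m * cnorm2 (x m)) F) <=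
      K * (fold_right Rplus 0 (map (fun m => weight s' m * cnorm2 (y m)) F) +
           fold_right Rplus 0 (map (fun m => weight s' m * cnorm2 (z m)) F))).
    { apply IH. intros; apply H; right; assumption. }
    nra.
Qed.

Lemma Rsup_upper (E : R -> Prop) x : bound E -> E x -> x <= Rsup E.
Proof.
  intros Hb Hx. unfold Rsup.
  destruct (excluded_middle_informative (bound E)) as [hb|]; [|contradiction].
  destruct (excluded_middle_informative (exists x, E x)) as [he|hn]; [|exfalso; eauto].
  destruct (completeness E hb he) as [l [Hl1 Hl2]]. simpl. apply Hl1; exact Hx.
Qed.

Lemma Rsup_least (E : R -> Prop) M : (exists x, E x) -> (forall x, E x -> x <= M) -> 0 <= M ->
  Rsup E <= M.
Proof.
  intros He Hb HM. unfold Rsup.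
  destruct (excluded_middle_informative (bound E)) as [hb|]; [|exact HM].
  destruct (excluded_middle_informative (exists x, E x)) as [he|hn]; [|exact HM].
  destruct (completeness E hb he) as [l [Hl1 Hl2]]. simpl. apply Hl2. exact Hb.
Qed.

Definition PS n s a := fun r => exists F, ValidSet n F /\ r = partial s a F.

Lemma VS_nil n : ValidSet n nil.
Proof. split; constructor. Qed.

Lemma Rsup_ge0 n s a : 0 <= Rsup (PS n s a).
Proof.
  unfold Rsup.
  destruct (excluded_middle_informative (bound (PS n s a))) as [hb|]; [|lra].
  destruct (excluded_middle_informative (exists x, PS n s a x)) as [he|hn]; [|lra].
  destruct (completeness _ hb he) as [l [Hl1 Hl2]]. simpl. apply Hl1.
  exists nil. split; [apply VS_nil| reflexivity].
Qed.

Lemma sqrt_add_le a b : 0 <= a -> 0 <= b -> sqrt (a + b) <= sqrt a + sqrt b.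
Proof.
  intros Ha Hb. pose proof (sqrt_pos a). pose proof (sqrt_pos b).
  rewrite <- (sqrt_square (sqrt a + sqrt b)) by lra.
  apply sqrt_le_1_alt.
  replace ((sqrt a + sqrt b) * (sqrt a + sqrt b)) with
    (sqrt a * sqrt a + sqrt b * sqrt b + 2 * sqrt a * sqrt b) by ring.
  rewrite !sqrt_sqrt by lra. nra.
Qed.

Lemma snorm_bound n s s' (x y z : Idx -> Cx) K : 0 <= K -> InW n s' y -> InW n s' z ->
  (forall m, valid n m -> weight s m * cnorm2 (x m) <=
      K * (weight s' m * cnorm2 (y m) + weight s' m * cnorm2 (z m))) ->
  snorm n s x <= sqrt K * (snorm n s' y + snorm n s' z).
Proof.
  intros HK [By HBy] [Bz HBz] Hpw. unfold snorm.
  fold (PS n s x) (PS n s' y) (PS n s' z).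
  pose proof (Rsup_ge0 n s' y). pose proof (Rsup_ge0 n s' z).
  assert (Hb : forall E B, (forall F, ValidSet n F -> partial s' E F <= B) -> bound (PS n s' E)).
  { intros E B HB. exists B. intros r [F [HF ->]]. apply HB; exact HF. }
  assert (Rsup (PS n s x) <= K * (Rsup (PS n s' y) + Rsup (PS n s' z))).
  { apply Rsup_least.
    - exists 0, nil. split; [apply VS_nil|reflexivity].
    - intros r [F [HF ->]].
      apply Rle_trans with (K * (partial s' y F + partial s' z F)).
      + apply partial_le; [exact HK|]. intros m Hm. apply Hpw.
        destruct HF as [_ HF]. rewrite Forall_forall in HF. apply HF; exact Hm.
      + apply Rmult_le_compat_l; [exact HK|]. apply Rplus_le_compat.
        * apply Rsup_upper; [eapply Hb; exact HBy|]. exists F; split; auto.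
        * apply Rsup_upper; [eapply Hb; exact HBz|]. exists F; split; auto.
    - apply Rmult_le_pos; lra. }
  apply Rle_trans with (sqrt (K * (Rsup (PS n s' y) + Rsup (PS n s' z)))).
  - apply sqrt_le_1_alt; exact H1.
  - rewrite sqrt_mult_alt by exact HK. apply Rmult_le_compat_l; [apply sqrt_pos|].
    apply sqrt_add_le; assumption.
Qed.

Definition zf : Idx -> Cx := fun _ => c0.

Lemma partial_zf s F : partial s zf F = 0.
Proof.
  induction F; unfold partial in *; simpl; [reflexivity|].
  rewrite IHF. unfold zf; rewrite cnorm2_c0. ring.
Qed.

Lemma InW_zf n s : InW n s zf.
Proof. exists 0. intros F _. rewrite partial_zf. lra. Qed.

Lemma snorm_zf n s : snorm n s zf = 0.
Proof.
  unfold snorm. apply sqrt_neg_0. fold (PS n s zf). apply Rsup_least.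
  - exists 0, nil. split; [apply VS_nil|reflexivity].
  - intros r [F [_ ->]]. rewrite partial_zf. lra.
  - lra.
Qed.
Definition Am n (tau : list R) (m : Idx) := csub (expi (dotK (tauvec n tau) m)) c1.
Definition Bm n (eta : list R) (m : Idx) := csub (expi (dotK (etavec n eta) m)) c1.

Definition Pdef n tau eta (t : bool) (f g : Idx -> Cx) (m : Idx) : Cx :=
  if list_eq_dec Z.eq_dec (fst m) (zeroZ n) then
    (if list_eq_dec Z.eq_dec (snd m) (zeroZ n) then c0
     else cadd (cdiv (g m) (Bm n eta m)) (if t then f m else c0))
  else cdiv (f m) (Am n tau m).

Lemma Am0 n tau m : fst m = zeroZ n -> Am n tau m = (0,0).
Proof.
  intro H. unfold Am, dotK, tauvec; simpl. rewrite H. unfold zeroZ.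
  rewrite dotRZ_zr, dotRZ_zl, Rplus_0_r. apply expi0.
Qed.

Lemma Bm0 n eta m : snd m = zeroZ n -> Bm n eta m = (0,0).
Proof.
  intro H. unfold Bm, dotK, etavec; simpl. rewrite H. unfold zeroZ.
  rewrite dotRZ_zr, dotRZ_zl, Rplus_0_r. apply expi0.
Qed.

Lemma D_le_W1 m : dotZZ (fst m) <= 1 + 4 * PI ^ 2 * mdot m.
Proof.
  pose proof (dotZZ_ge0 (snd m)). pose proof (W_ge1 m) as H1.
  unfold mdot in *. pose proof PI_RGT_0. pose proof (dotZZ_ge0 (fst m)).
  assert (1 <= PI^2) by (pose proof PI2_3_2; simpl; nra). nra.
Qed.

Lemma D_le_W2 m : dotZZ (snd m) <= 1 + 4 * PI ^ 2 * mdot m.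
Proof.
  pose proof (dotZZ_ge0 (snd m)). pose proof (W_ge1 m) as H1.
  unfold mdot in *. pose proof PI_RGT_0. pose proof (dotZZ_ge0 (fst m)).
  assert (1 <= PI^2) by (pose proof PI2_3_2; simpl; nra). nra.
Qed.

Lemma dioA n tau eta c gamma m : 0 < c -> 0 < gamma -> diophantine n tau eta c gamma ->
  valid n m -> fst m <> zeroZ n ->
  0 < cnorm2 (Am n tau m) /\ / cnorm2 (Am n tau m) <= Wg gamma m / (4 * (c * c)).
Proof.
  intros Hc Hg [D1 _] Hv Hm. unfold Am, Wg.
  apply (dio_bound _ (dotZZ (fst m))).
  - apply (dotZZ_ge1 _ n); [apply Hv| exact Hm].
  - apply D_le_W1.
  - exact Hc.
  - exact Hg.
  - intro p. apply D1; auto.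
Qed.

Lemma dioB n tau eta c gamma m : 0 < c -> 0 < gamma -> diophantine n tau eta c gamma ->
  valid n m -> snd m <> zeroZ n ->
  0 < cnorm2 (Bm n eta m) /\ / cnorm2 (Bm n eta m) <= Wg gamma m / (4 * (c * c)).
Proof.
  intros Hc Hg [_ D2] Hv Hm. unfold Bm, Wg.
  apply (dio_bound _ (dotZZ (snd m))).
  - apply (dotZZ_ge1 _ n); [apply Hv| exact Hm].
  - apply D_le_W2.
  - exact Hc.
  - exact Hg.
  - intro p. apply D2; auto.
Qed.

Lemma zero_case n m : fst m = zeroZ n -> snd m = zeroZ n -> m = zeroIdx n.
Proof. destruct m; simpl; intros -> ->; reflexivity. Qed.

Lemma csub00 z : csub z (0,0) = z.
Proof. destruct z; unfold csub; simpl; f_equal; ring. Qed.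

Lemma cnorm2_00 : cnorm2 (0,0) = 0.
Proof. unfold cnorm2; simpl; ring. Qed.

Lemma triv0 b : cnorm2 (csub c0 (cmul b c0)) = 0.
Proof. destruct b; unfold cnorm2, csub, cmul, c0; simpl; ring. Qed.

Lemma conv gamma s m X Y Z K : 0 <= K -> X <= K * Wg gamma m * (Y + Z) ->
  weight s m * X <= K * (weight (s + 2*gamma) m * Y + weight (s + 2*gamma) m * Z).
Proof.
  intros HK H. unfold weight, Wg in *. rewrite Rpower_plus.
  pose proof (Rpower_pos (1 + 4 * PI ^ 2 * mdot m) s).
  replace (K * (Rpower (1 + 4 * PI ^ 2 * mdot m) s * Rpower (1 + 4 * PI ^ 2 * mdot m) (2 * gamma) * Y +
   Rpower (1 + 4 * PI ^ 2 * mdot m) s * Rpower (1 + 4 * PI ^ 2 * mdot m) (2 * gamma) * Z))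
   with (Rpower (1 + 4 * PI ^ 2 * mdot m) s * (K * Rpower (1 + 4 * PI ^ 2 * mdot m) (2 * gamma) * (Y + Z)))
   by ring.
  apply Rmult_le_compat_l; lra.
Qed.


Lemma pw_all n tau eta c gamma (t : bool) (phi f g : Idx -> Cx) m :
  0 < c -> 0 < gamma -> diophantine n tau eta c gamma -> valid n m ->
  zero_avg n f -> zero_avg n g ->
  phi m = csub (cmul (Bm n eta m) (f m)) (cmul (Am n tau m) (g m)) ->
  let Kc := 2 * (/ (4 * (c * c)) + 1) in
  cnorm2 (csub (g m) (cmul (Bm n eta m) (Pdef n tau eta t f g m))) <= Kc * Wg gamma m * (cnorm2 (phi m) + cnorm2 (zf m)) /\
  cnorm2 (csub (f m) (cmul (Am n tau m) (Pdef n tau eta t f g m))) <= Kc * Wg gamma m * (cnorm2 (phi m) + cnorm2 (zf m)) /\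
  cnorm2 (Pdef n tau eta t f g m) <= Kc * Wg gamma m * (cnorm2 (f m) + cnorm2 (g m)).
Proof.
  intros Hc Hg Hd Hv Hf0 Hg0 Hphi Kc.
  unfold zf. rewrite cnorm2_c0, Rplus_0_r.
  pose proof (Wg_ge1 gamma m Hg) as HW.
  assert (Hi : 0 < / (4 * (c * c))) by (apply Rinv_0_lt_compat; nra).
  assert (HK1 : 1 <= Kc * Wg gamma m) by (unfold Kc; nra).
  assert (HKi : / (4 * (c*c)) * Wg gamma m <= Kc * Wg gamma m) by (unfold Kc; nra).
  pose proof (cnorm2_ge0 (phi m)) as Hp0.
  pose proof (cnorm2_ge0 (f m)) as Hf. pose proof (cnorm2_ge0 (g m)) as Hgg.
  unfold Pdef.
  destruct (list_eq_dec Z.eq_dec (fst m) (zeroZ n)) as [E1|E1].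
  - rewrite (Am0 n tau m E1) in *. rewrite cmul00, csub00 in Hphi.
    destruct (list_eq_dec Z.eq_dec (snd m) (zeroZ n)) as [E2|E2].
    + pose proof (zero_case n m E1 E2) as Ez. unfold zero_avg in *.
      assert (F0 : f m = c0) by (rewrite Ez; exact Hf0).
      assert (G0 : g m = c0) by (rewrite Ez; exact Hg0).
      rewrite F0, G0 in *.
      rewrite !triv0, !cnorm2_c0. assert (0 <= Kc * Wg gamma m) by lra.
      repeat split; nra.
    + destruct (dioB n tau eta c gamma m Hc Hg Hd Hv E2) as [HB1 HB2].
      assert (HB : cnorm2 (Bm n eta m) <> 0) by lra.
      assert (Hfb : cnorm2 (f m) <= Kc * Wg gamma m * cnorm2 (phi m)).
      { rewrite Hphi, cnorm2_mul.
        assert (/ cnorm2 (Bm n eta m) <= Kc * Wg gamma m) by (unfold Rdiv in HB2; nra).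
        assert (1 <= Kc * Wg gamma m * cnorm2 (Bm n eta m)).
        { replace 1 with (cnorm2 (Bm n eta m) * / cnorm2 (Bm n eta m)) by (field; exact HB).
          apply Rle_trans with (cnorm2 (Bm n eta m) * (Kc * Wg gamma m)); [apply Rmult_le_compat_l; lra| lra]. }
        nra. }
      split; [|split].
      * pose proof (caseA2 (Bm n eta m) (f m) (g m) t HB). rewrite <- Hphi in H. nra.
      * rewrite cmul00, csub00. exact Hfb.
      * eapply Rle_trans; [apply cnorm2_add|].
        rewrite cnorm2_div by exact HB.
        assert (cnorm2 (if t then f m else c0) <= cnorm2 (f m)) by (destruct t; [lra| rewrite cnorm2_c0; lra]).
        assert (cnorm2 (g m) / cnorm2 (Bm n eta m) <= / (4 * (c*c)) * Wg gamma m * cnorm2 (g m)).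
        { unfold Rdiv. rewrite Rmult_comm. apply Rmult_le_compat_r; [lra|]. unfold Rdiv in HB2; lra. }
        replace (Kc * Wg gamma m * (cnorm2 (f m) + cnorm2 (g m))) with
          (2 * ((/ (4 * (c * c)) + 1) * Wg gamma m * cnorm2 (f m) + (/ (4 * (c * c)) + 1) * Wg gamma m * cnorm2 (g m)))
          by (unfold Kc; ring).
        assert (0 <= Wg gamma m * cnorm2 (g m)) by (apply Rmult_le_pos; lra).
        assert (/ (4 * (c * c)) * Wg gamma m * cnorm2 (g m) <= (/ (4 * (c * c)) + 1) * Wg gamma m * cnorm2 (g m)) by nra.
        assert (1 <= (/ (4 * (c * c)) + 1) * Wg gamma m) by nra.
        assert (cnorm2 (f m) <= (/ (4 * (c * c)) + 1) * Wg gamma m * cnorm2 (f m)) by nra.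
        lra.
  - destruct (dioA n tau eta c gamma m Hc Hg Hd Hv E1) as [HA1 HA2].
    assert (HA : cnorm2 (Am n tau m) <> 0) by lra.
    assert (HAi : / cnorm2 (Am n tau m) <= Kc * Wg gamma m) by (unfold Rdiv in HA2; nra).
    split; [|split].
    + pose proof (caseA (Am n tau m) (Bm n eta m) (f m) (g m) HA) as H. rewrite <- Hphi in H.
      replace (cnorm2 (csub (g m) (cmul (Bm n eta m) (cdiv (f m) (Am n tau m))))) with
        (cnorm2 (phi m) * / cnorm2 (Am n tau m)) by (rewrite <- H; field; exact HA).
      rewrite Rmult_comm. apply Rmult_le_compat_r; lra.
    + rewrite caseB1 by exact HA. rewrite cnorm2_00. nra.
    + rewrite cnorm2_div by exact HA. unfold Rdiv. rewrite Rmult_comm.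
      apply Rle_trans with (Kc * Wg gamma m * cnorm2 (f m)).
      * apply Rmult_le_compat_r; lra.
      * apply Rmult_le_compat_l; lra.
Qed.
Lemma cmul_c0 a : cmul a c0 = c0.
Proof. destruct a; unfold cmul, c0; simpl; f_equal; ring. Qed.

Theorem proposition2p2 (n : nat) (tau eta : list R) (c gamma : R) :
  (2 <= n)%nat -> length tau = n -> length eta = n ->
  dotRR tau eta = 0 ->
  0 < c -> 0 < gamma -> diophantine n tau eta c gamma ->
  exists C : R, 0 < C /\
    forall phi f g : Idx -> Cx,
      InWinf n phi -> InWinf n f -> InWinf n g ->
      zero_avg n f -> zero_avg n g -> nonconstant n f -> nonconstant n g ->
      (forall m, valid n m ->
         csub (Lop (etavec n eta) f m) (Lop (tauvec n tau) g m) = phi m) ->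
      exists P : Idx -> Cx, InWinf n P /\ nonconstant n P /\
        forall s : R, 0 <= s ->
          snorm n s (fun m => csub (g m) (Lop (etavec n eta) P m))
            <= C * snorm n (s + 2 * gamma) phi /\
          snorm n s (fun m => csub (f m) (Lop (tauvec n tau) P m))
            <= C * snorm n (s + 2 * gamma) phi /\
          snorm n s P
            <= C * (snorm n (s + 2 * gamma) f + snorm n (s + 2 * gamma) g).
Proof.
  intros Hn Hlt Hle Hdot Hc Hg Hd.
  set (Kc := 2 * (/ (4 * (c * c)) + 1)).
  assert (HKc : 0 < Kc).
  { unfold Kc. assert (0 < / (4 * (c * c))) by (apply Rinv_0_lt_compat; nra). lra. }
  exists (sqrt Kc). split; [apply sqrt_lt_R0; lra|].
  intros phi f g Hphi Hf Hgw Hf0 Hg0 Hfn Hgn Heq.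
  assert (Hphim : forall m, valid n m ->
     phi m = csub (cmul (Bm n eta m) (f m)) (cmul (Am n tau m) (g m))).
  { intros m Hm. rewrite <- (Heq m Hm). reflexivity. }
  assert (Common : forall t, InWinf n (Pdef n tau eta t f g) /\
     forall s : R, 0 <= s ->
          snorm n s (fun m => csub (g m) (Lop (etavec n eta) (Pdef n tau eta t f g) m))
            <= sqrt Kc * snorm n (s + 2 * gamma) phi /\
          snorm n s (fun m => csub (f m) (Lop (tauvec n tau) (Pdef n tau eta t f g) m))
            <= sqrt Kc * snorm n (s + 2 * gamma) phi /\
          snorm n s (Pdef n tau eta t f g)
            <= sqrt Kc * (snorm n (s + 2 * gamma) f + snorm n (s + 2 * gamma) g)).
  { intro t. split.
    - intro s. destruct (Hf (s + 2*gamma)) as [Bf HBf]. destruct (Hgw (s + 2*gamma)) as [Bg HBg].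
      exists (Kc * (Bf + Bg)). intros F HF.
      eapply Rle_trans; [apply (partial_le s (s + 2*gamma) _ f g Kc F)|].
      + lra.
      + intros m Hm. destruct HF as [_ HF]. rewrite Forall_forall in HF.
        apply conv; [lra|].
        exact (proj2 (proj2 (pw_all n tau eta c gamma t phi f g m Hc Hg Hd (HF m Hm) Hf0 Hg0 (Hphim m (HF m Hm))))).
      + apply Rmult_le_compat_l; [lra|]. apply Rplus_le_compat; [apply HBf|apply HBg]; exact HF.
    - intros s Hs. split; [|split].
      + rewrite <- (Rplus_0_r (snorm n (s + 2 * gamma) phi)), <- (snorm_zf n (s + 2*gamma)).
        apply snorm_bound; [lra| apply Hphi| apply InW_zf|].
        intros m Hm. apply conv; [lra|].
        exact (proj1 (pw_all n tau eta c gamma t phi f g m Hc Hg Hd Hm Hf0 Hg0 (Hphim m Hm))).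
      + rewrite <- (Rplus_0_r (snorm n (s + 2 * gamma) phi)), <- (snorm_zf n (s + 2*gamma)).
        apply snorm_bound; [lra| apply Hphi| apply InW_zf|].
        intros m Hm. apply conv; [lra|].
        exact (proj1 (proj2 (pw_all n tau eta c gamma t phi f g m Hc Hg Hd Hm Hf0 Hg0 (Hphim m Hm)))).
      + apply snorm_bound; [lra| apply Hf| apply Hgw|].
        intros m Hm. apply conv; [lra|].
        exact (proj2 (proj2 (pw_all n tau eta c gamma t phi f g m Hc Hg Hd Hm Hf0 Hg0 (Hphim m Hm)))). }
  destruct (excluded_middle_informative (nonconstant n (Pdef n tau eta false f g))) as [Hnc|Hnc].
  - exists (Pdef n tau eta false f g). destruct (Common false) as [C1 C2]. auto.
  - exists (Pdef n tau eta true f g). destruct (Common true) as [C1 C2].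
    split; [exact C1|]. split; [|exact C2].
    destruct Hfn as [m [Hv [Hne Hfm]]].
    assert (Hz : Pdef n tau eta false f g m = c0).
    { destruct (excluded_middle_informative (Pdef n tau eta false f g m = c0)) as [E|E]; [exact E|].
      exfalso. apply Hnc. exists m. auto. }
    exists m. split; [exact Hv|]. split; [exact Hne|].
    revert Hz. unfold Pdef.
    destruct (list_eq_dec Z.eq_dec (fst m) (zeroZ n)) as [E1|E1].
    + destruct (list_eq_dec Z.eq_dec (snd m) (zeroZ n)) as [E2|E2].
      * exfalso. apply Hne. apply zero_case; assumption.
      * generalize (cdiv (g m) (Bm n eta m)). intros [u1 u2] Hz.
        destruct (f m) as [f1 f2] eqn:Ef. unfold cadd, c0 in *; simpl in *.
        injection Hz; intros. intro E; injection E; intros. apply Hfm. f_equal; lra.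
    + intro Hz. exfalso. apply Hfm.
      assert (HA : cnorm2 (Am n tau m) <> 0).
      { destruct (dioA n tau eta c gamma m Hc Hg Hd Hv E1). lra. }
      rewrite <- (cmul_div (Am n tau m) (f m) HA), Hz. apply cmul_c0.
Qed.
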